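(* Let $e$ be a closed term with $\vdash e:\perp\to X$, where $X$ is a propositional variable. Then for each $\lambda$-variable $x$ and each finite sequence of $\lambda$-variables $\bar y$, $(e\;x)\;\bar y\triangleright^*\underline{\mu}.x$, i.e. $(e\;x)\;\bar y$ reduces to some element of $M_x$.
   Context: $\lambda\mu$-terms: $t::= x\mid \lambda x.t\mid (t\;t)\mid \mu a.t\mid (a\;t)$ over disjoint infinite sets of $\lambda$-variables and $\mu$-variables; types built from propositional variables and $\perp$ with $\to$. Reduction $(\lambda x.u\;v)\triangleright u[x:=v]$, $(\mu a.u\;v)\triangleright\mu a.u[a:=^*v]$ ($u[a:=^*v]$ replaces each subterm $(a\;w)$ of $u$ by $(a\;(w\;v))$), $\triangleright^*$ its reflexive transitive compatible closure. Typing rules: (ax) $\Gamma\vdash x:A;\Delta$ if $x:A\in\Gamma$; ($\to_i$) from $\Gamma,x:A\vdash t:B;\Delta$ infer $\Gamma\vdash\lambda x.t:A\to B;\Delta$; ($\to_e$) from $\Gamma\vdash u:A\to B;\Delta$, $\Gamma\vdash v:A;\Delta$ infer $\Gamma\vdash(u\;v):B;\Delta$; ($\mu$) from $\Gamma\vdash t:\perp;\Delta,a:A$ infer $\Gamma\vdash\mu a.t:A;\Delta$; ($\perp$) from $\Gamma\vdash t:A;\Delta,a:A$ infer $\Gamma\vdash(a\;t):\perp;\Delta,a:A$; $\vdash$ means empty contexts. For a sequence $\bar y=y_1\dots y_n$, $t\;\bar y=((t\;y_1)\dots y_n)$. For a term $t$, $M_t$ is the smallest set containing $t$ such that $u\in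 M_t$ and $a$ a $\mu$-variable imply $\mu a.u\in M_t$ and $(a\;u)\in M_t$; $\underline{\mu}.t$ denotes an arbitrary element of $M_t$. *)

(* Defs.v *)
(* Lambda-mu calculus with locally-nameless-free, two-sorted
   de Bruijn indices: lambda-variables and mu-variables live in separate
   index spaces (they are disjoint sorts), so a mu-binder does not shift
   lambda-indices and vice versa. *)
From Stdlib Require Import List Arith Relations.
Import ListNotations.

Inductive term : Type :=
| Var  : nat -> term
| Lam  : term -> term
| App  : term -> term -> term
| Mu   : term -> term
| MApp : nat -> term -> term.   (* (a t), a a mu-variable (de Bruijn index) *)

Inductive type : Type :=
| TVar : nat -> type
| TBot : type
| TArr : type -> type -> type.

Fixpoint lift_lam (c : nat) (t : term) : term :=
  match t with
  | Var n => if n <? c then Var n else Var (S n)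
  | Lam u => Lam (lift_lam (S c) u)
  | App u v => App (lift_lam c u) (lift_lam c v)
  | Mu u => Mu (lift_lam c u)
  | MApp a u => MApp a (lift_lam c u)
  end.

Fixpoint lift_mu (c : nat) (t : term) : term :=
  match t with
  | Var n => Var n
  | Lam u => Lam (lift_mu c u)
  | App u v => App (lift_mu c u) (lift_mu c v)
  | Mu u => Mu (lift_mu (S c) u)
  | MApp a u => MApp (if a <? c then a else S a) (lift_mu c u)
  end.

(* capture-avoiding substitution u[x := v] for the lambda-variable of index k
   (free lambda-indices above k are decremented, as the binder disappears) *)
Fixpoint subst (t : term) (k : nat) (v : term) : term :=
  match t with
  | Var n => if n =? k then v else if k <? n then Var (pred n) else Var n
  | Lam u => Lam (subst u (S k) (lift_lam 0 v))
  | App u w => App (subst u k v) (subst w k v)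
  | Mu u => Mu (subst u k (lift_mu 0 v))
  | MApp a u => MApp a (subst u k v)
  end.

Fixpoint msubst (t : term) (k : nat) (v : term) : term :=
  match t with
  | Var n => Var n
  | Lam u => Lam (msubst u k (lift_lam 0 v))
  | App u w => App (msubst u k v) (msubst w k v)
  | Mu u => Mu (msubst u (S k) (lift_mu 0 v))
  | MApp a u =>
      if a =? k then MApp a (App (msubst u k v) v) else MApp a (msubst u k v)
  end.

Inductive step : term -> term -> Prop :=
| step_beta : forall u v, step (App (Lam u) v) (subst u 0 v)
| step_mu : forall u v, step (App (Mu u) v) (Mu (msubst u 0 (lift_mu 0 v)))
| step_lam : forall t t', step t t' -> step (Lam t) (Lam t')
| step_appl : forall t t' u, step t t' -> step (App t u) (App t' u)
| step_appr : forall t u u', step u u' -> step (App t u) (App t u')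
| step_mu_c : forall t t', step t t' -> step (Mu t) (Mu t')
| step_mapp : forall a t t', step t t' -> step (MApp a t) (MApp a t').

Definition red : term -> term -> Prop := clos_refl_trans term step.

(* typing judgement  Gamma |- t : A ; Delta  (Curry style) *)
Inductive typing : list type -> list type -> term -> type -> Prop :=
| ty_ax : forall G D n A, nth_error G n = Some A -> typing G D (Var n) A
| ty_lam : forall G D t A B, typing (A :: G) D t B -> typing G D (Lam t) (TArr A B)
| ty_app : forall G D u v A B,
    typing G D u (TArr A B) -> typing G D v A -> typing G D (App u v) B
| ty_mu : forall G D t A, typing G (A :: D) t TBot -> typing G D (Mu t) A
| ty_bot : forall G D a t A,
    nth_error D a = Some A -> typing G D t A -> typing G D (MApp a t) TBot.

Definition apps (t : term) (ys : list nat) : term :=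
  fold_left (fun acc y => App acc (Var y)) ys t.

Inductive M (t : term) : term -> Prop :=
| M_base : M t t
| M_mu : forall u, M t u -> M t (Mu u)
| M_mapp : forall a u, M t u -> M t (MApp a u).

(* Main.v *)
Require Import Defs.
From Stdlib Require Import List Arith Lia Relations FunctionalExtensionality.
Import ListNotations.

Arguments Nat.eqb : simpl never.
Arguments Nat.ltb : simpl never.
Ltac arith := repeat (simpl; match goal with
  | |- context [?a <? ?b] => destruct (Nat.ltb_spec a b)
  | |- context [?a =? ?b] => destruct (Nat.eqb_spec a b) end);
  simpl; try reflexivity; try (f_equal; lia); try lia.

Lemma ll_ll : forall t c d, c <= d ->
  lift_lam (S d) (lift_lam c t) = lift_lam c (lift_lam d t).
Proof. induction t; intros c d H; simpl; try (f_equal; auto; fail).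
  - arith.
  - f_equal. apply IHt. lia. Qed.

Lemma lm_lm : forall t c d, c <= d ->
  lift_mu (S d) (lift_mu c t) = lift_mu c (lift_mu d t).
Proof. induction t; intros c d H; simpl; try (f_equal; auto; fail).
  - f_equal. apply IHt. lia.
  - rewrite IHt by auto. f_equal. arith. Qed.

Lemma ll_lm : forall t c d, lift_lam c (lift_mu d t) = lift_mu d (lift_lam c t).
Proof. induction t; intros c d; simpl; try (f_equal; auto; fail). arith. Qed.

Lemma subst_ll : forall t k u, subst (lift_lam k t) k u = t.
Proof. induction t; intros k u; simpl; try (f_equal; auto; fail). arith. Qed.

Lemma subst_ll_comm : forall t c k u, c <= k ->
  subst (lift_lam c t) (S k) (lift_lam c u) = lift_lam c (subst t k u).
Proof. induction t; intros c k u H; simpl; try (f_equal; auto; fail).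
  - arith.
  - f_equal. rewrite <- IHt by lia. f_equal. first [apply ll_ll | symmetry; apply ll_ll]; lia.
  - f_equal. rewrite <- IHt by lia. f_equal. first [apply ll_lm | symmetry; apply ll_lm]. Qed.

Lemma subst_lm : forall t c k u,
  subst (lift_mu c t) k (lift_mu c u) = lift_mu c (subst t k u).
Proof. induction t; intros c k u; simpl; try (f_equal; auto; fail).
  - arith.
  - f_equal. rewrite <- IHt. f_equal. first [apply ll_lm | symmetry; apply ll_lm].
  - f_equal. rewrite <- IHt. f_equal. first [apply lm_lm | symmetry; apply lm_lm]; lia. Qed.

Lemma msubst_ll : forall s c k w,
  msubst (lift_lam c s) k (lift_lam c w) = lift_lam c (msubst s k w).
Proof. induction s; intros c k w; simpl; try (f_equal; auto; fail).
  - arith.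
  - f_equal. rewrite <- IHs. f_equal. first [apply ll_ll | symmetry; apply ll_ll]; lia.
  - f_equal. rewrite <- IHs. f_equal. first [apply ll_lm | symmetry; apply ll_lm].
  - destruct (n =? k); simpl; rewrite IHs; auto. Qed.

Lemma msubst_lm : forall s c k w, c <= k ->
  msubst (lift_mu c s) (S k) (lift_mu c w) = lift_mu c (msubst s k w).
Proof. induction s; intros c k w H; simpl; try (f_equal; auto; fail).
  - f_equal. rewrite <- IHs by lia. f_equal. first [apply ll_lm | symmetry; apply ll_lm].
  - f_equal. rewrite <- IHs by lia. f_equal. first [apply lm_lm | symmetry; apply lm_lm]; lia.
  - arith; rewrite IHs by lia; reflexivity. Qed.

Lemma msubst_lm_id : forall s k w, msubst (lift_mu k s) k w = lift_mu k s.
Proof. induction s; intros k w; simpl; try (f_equal; auto; fail).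
  rewrite IHs. arith. Qed.

Definition upz (z : nat -> nat) (a : nat) := match a with 0 => 0 | S b => S (z b) end.

Fixpoint ren (z : nat -> nat) (t : term) : term :=
  match t with
  | Var n => Var n
  | Lam u => Lam (ren z u)
  | App u v => App (ren z u) (ren z v)
  | Mu u => Mu (ren (upz z) u)
  | MApp a u => MApp (z a) (ren z u)
  end.

Definition appt (t : term) (l : list term) := fold_left App l t.

Definition upl (s : nat -> term) (n : nat) :=
  match n with 0 => Var 0 | S m => lift_lam 0 (s m) end.
Definition upr (r : nat -> list term) (a : nat) :=
  match a with 0 => [] | S b => map (lift_mu 0) (r b) end.

Fixpoint sub (s : nat -> term) (z : nat -> nat) (r : nat -> list term) (t : term) : term :=
  match t with
  | Var n => s n
  | Lam u => Lam (sub (upl s) z (fun a => map (lift_lam 0) (r a)) u)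
  | App u v => App (sub s z r u) (sub s z r v)
  | Mu u => Mu (sub (fun n => lift_mu 0 (s n)) (upz z) (upr r) u)
  | MApp a u => MApp (z a) (appt (sub s z r u) (r a))
  end.

Lemma ren_ll : forall t z c, ren z (lift_lam c t) = lift_lam c (ren z t).
Proof. induction t; intros z c; simpl; try (f_equal; auto; fail).
  destruct (n <? c); reflexivity. Qed.

Lemma lm_ren : forall t c, lift_mu c t = ren (fun a => if a <? c then a else S a) t.
Proof. induction t; intros c; simpl; try (f_equal; auto; fail).
  f_equal. rewrite IHt. f_equal. apply functional_extensionality.
  intros [|a]; [reflexivity|]. cbv [upz]. change (S a <? S c) with (a <? c).
  destruct (a <? c); reflexivity. Qed.

Lemma ren_ren : forall t z z', ren z' (ren z t) = ren (fun a => z' (z a)) t.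
Proof. induction t; intros z z'; simpl; try (f_equal; auto; fail).
  f_equal. rewrite IHt. f_equal. apply functional_extensionality.
  intros [|a]; reflexivity. Qed.

Lemma ren_id : forall t, ren (fun a => a) t = t.
Proof. induction t; simpl; try (f_equal; auto; fail).
  f_equal. rewrite <- IHt at 2. f_equal. apply functional_extensionality.
  intros [|a]; reflexivity. Qed.

Lemma lm0_ren : forall s z, ren (upz z) (lift_mu 0 s) = lift_mu 0 (ren z s).
Proof. intros. rewrite !lm_ren, !ren_ren. reflexivity. Qed.

Lemma ren_appt : forall l s z, ren z (appt s l) = appt (ren z s) (map (ren z) l).
Proof. induction l; intros; simpl; auto. Qed.
Lemma subst_appt : forall l s k u,
  subst (appt s l) k u = appt (subst s k u) (map (fun w => subst w k u) l).
Proof. induction l; intros; simpl; auto. Qed.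
Lemma msubst_appt : forall l s k u,
  msubst (appt s l) k u = appt (msubst s k u) (map (fun w => msubst w k u) l).
Proof. induction l; intros; simpl; auto. Qed.

Lemma ren_sub : forall t s z r z',
  ren z' (sub s z r t) = sub (fun n => ren z' (s n)) (fun a => z' (z a))
                              (fun a => map (ren z') (r a)) t.
Proof. induction t; intros s z r z'; simpl; try (f_equal; auto; fail).
  - f_equal. rewrite IHt. f_equal.
    + apply functional_extensionality; intros [|n]; simpl; auto. apply ren_ll.
    + apply functional_extensionality; intros a. rewrite !map_map.
      apply map_ext. intros; apply ren_ll.
  - f_equal. rewrite IHt. f_equal.
    + apply functional_extensionality; intros n. apply lm0_ren.
    + apply functional_extensionality; intros [|a]; reflexivity.
    + apply functional_extensionality; intros [|a]; simpl; auto.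
      rewrite !map_map. apply map_ext. intros; apply lm0_ren.
  - rewrite ren_appt, IHt. reflexivity. Qed.

Lemma subst_sub : forall t s z r k u,
  subst (sub s z r t) k u = sub (fun n => subst (s n) k u) z
                              (fun a => map (fun w => subst w k u) (r a)) t.
Proof. induction t; intros s z r k u; simpl; try (f_equal; auto; fail).
  - f_equal. rewrite IHt. f_equal.
    + apply functional_extensionality; intros [|n]; simpl; auto.
      apply subst_ll_comm. lia.
    + apply functional_extensionality; intros a. rewrite !map_map.
      apply map_ext. intros; apply subst_ll_comm; lia.
  - f_equal. rewrite IHt. f_equal.
    + apply functional_extensionality; intros n. apply subst_lm.
    + apply functional_extensionality; intros [|a]; simpl; auto.
      rewrite !map_map. apply map_ext. intros; apply subst_lm.
  - rewrite subst_appt, IHt. reflexivity. Qed.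

Lemma appt_snoc : forall l s w, appt s (l ++ [w]) = App (appt s l) w.
Proof. intros. unfold appt. rewrite fold_left_app. reflexivity. Qed.

Lemma msubst_sub : forall t s z r k w,
  msubst (sub s z r t) k w = sub (fun n => msubst (s n) k w) z
     (fun a => map (fun v => msubst v k w) (r a) ++ (if z a =? k then [w] else [])) t.
Proof. induction t; intros s z r k w; simpl; try (f_equal; auto; fail).
  - f_equal. rewrite IHt. f_equal.
    + apply functional_extensionality; intros [|n]; simpl; auto.
      apply msubst_ll.
    + apply functional_extensionality; intros a. rewrite map_app, !map_map.
      f_equal. apply map_ext. intros; apply msubst_ll.
      destruct (z a =? k); reflexivity.
  - f_equal. rewrite IHt. f_equal.
    + apply functional_extensionality; intros n. apply msubst_lm. lia.
    + apply functional_extensionality; intros [|a]; simpl; auto.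
      rewrite map_app, !map_map. f_equal. apply map_ext. intros; apply msubst_lm; lia.
      change (S (z a) =? S k) with (z a =? k). destruct (z a =? k); reflexivity.
  - rewrite msubst_appt, IHt. destruct (z n =? k); simpl; auto.
    rewrite appt_snoc. reflexivity. rewrite app_nil_r. reflexivity. Qed.

Lemma red_ctx : forall f : term -> term, (forall t t', step t t' -> step (f t) (f t')) ->
  forall t t', red t t' -> red (f t) (f t').
Proof. intros f Hf t t' H. induction H.
  - apply rt_step. auto.
  - apply rt_refl.
  - eapply rt_trans; eauto. Qed.

Lemma step_appt : forall l t t', step t t' -> step (appt t l) (appt t' l).
Proof. induction l; intros; simpl; auto. apply IHl. constructor. auto. Qed.

Definition R0 (rho : nat -> list term) (l : list term) (a : nat) :=
  match a with 0 => map (lift_mu 0) l | S b => map (lift_mu 0) (rho b) end.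

Lemma mu_red : forall p s z rho t l,
  red (appt (Mu (sub (fun n => lift_mu 0 (s n)) (upz z) (R0 rho l) t)) p)
      (Mu (sub (fun n => lift_mu 0 (s n)) (upz z) (R0 rho (l ++ p)) t)).
Proof. induction p; intros s z rho t l.
  - rewrite app_nil_r. apply rt_refl.
  - simpl. eapply rt_trans.
    + apply rt_step. apply step_appt. apply step_mu.
    + rewrite msubst_sub.
      replace (sub (fun n => msubst (lift_mu 0 (s n)) 0 (lift_mu 0 a)) (upz z)
        (fun a0 => map (fun v => msubst v 0 (lift_mu 0 a)) (R0 rho l a0) ++
          (if upz z a0 =? 0 then [lift_mu 0 a] else [])) t)
      with (sub (fun n => lift_mu 0 (s n)) (upz z) (R0 rho (l ++ [a])) t).
      * replace (l ++ a :: p) with ((l ++ [a]) ++ p) by (rewrite <- app_assoc; reflexivity). apply IHp.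
      * f_equal.
        -- apply functional_extensionality; intros n. symmetry. apply msubst_lm_id.
        -- apply functional_extensionality; intros [|b]; simpl.
           ++ rewrite map_app, map_map. simpl. f_equal. apply map_ext.
              intros; symmetry; apply msubst_lm_id.
           ++ rewrite app_nil_r, map_map. apply map_ext.
              intros; symmetry; apply msubst_lm_id.
Qed.

Definition good (x : nat) (t : term) := exists m, M (Var x) m /\ red t m.

Fixpoint stk (x : nat) (A : type) : list term -> Prop :=
  match A with
  | TVar _ => fun p => Forall (fun t => exists y, t = Var y) p
  | TBot => fun p => p = []
  | TArr A B => fun p => exists u p', p = u :: p' /\
      (forall z p0, stk x A p0 -> good x (appt (ren z u) p0)) /\ stk x B p'
  end.

Definition real x A t := forall z p, stk x A p -> good x (appt (ren z t) p).

Lemma stk_ren : forall x A p z, stk x A p -> stk x A (map (ren z) p).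
Proof. induction A; simpl; intros p z H.
  - induction H; simpl; constructor; auto. destruct H as [y ->]. exists y; reflexivity.
  - subst; reflexivity.
  - destruct H as (u & p' & -> & Hu & Hp). exists (ren z u), (map (ren z) p').
    split; [reflexivity|]. split; auto. intros z0 p0 H0. rewrite ren_ren. auto.
Qed.

Lemma stk_lift : forall x A p c, stk x A p -> stk x A (map (lift_mu c) p).
Proof. intros. replace (map (lift_mu c) p) with
  (map (ren (fun a => if a <? c then a else S a)) p).
  apply stk_ren; auto. apply map_ext. intros; symmetry; apply lm_ren. Qed.

Lemma real_ren : forall x A t z, real x A t -> real x A (ren z t).
Proof. unfold real; intros. rewrite ren_ren. auto. Qed.

Lemma good_back : forall x t t', red t t' -> good x t' -> good x t.
Proof. intros x t t' H [m [Hm Hr]]. exists m. split; auto. eapply rt_trans; eauto. Qed.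

Definition scons (u : term) (s : nat -> term) (n : nat) :=
  match n with 0 => u | S m => s m end.

Lemma adequacy : forall x G D t A, typing G D t A ->
  forall s z r, (forall n B, nth_error G n = Some B -> real x B (s n)) ->
  (forall a B, nth_error D a = Some B -> stk x B (r a)) ->
  real x A (sub s z r t).
Proof.
  intros x G D t A H. induction H; intros s z r Hs Hr; intros z' p Hp;
    rewrite ren_sub.
  - simpl. apply (Hs _ _ H _ _ Hp).
  - destruct Hp as (u & p' & -> & Hu & Hp'). cbn [sub appt fold_left].
    eapply good_back.
    + apply red_ctx with (f := fun t => appt t p'). apply step_appt.
      apply rt_step. apply step_beta.
    + rewrite subst_sub.
      replace (sub (fun n => subst (upl (fun n0 => ren z' (s n0)) n) 0 u) (fun a => z' (z a))
        (fun a => map (fun w => subst w 0 u) (map (lift_lam 0) (map (ren z') (r a)))) t)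
      with (sub (scons u (fun n0 => ren z' (s n0))) (fun a => z' (z a))
              (fun a => map (ren z') (r a)) t).
      * rewrite <- (ren_id (sub _ _ _ t)). apply IHtyping; auto.
        -- intros [|n] B0 HB; simpl in HB.
           ++ injection HB as <-. intros z0 p0 H0. apply Hu; auto.
           ++ apply real_ren. eauto.
        -- intros a B0 HB. apply stk_ren. eauto.
      * f_equal.
        -- apply functional_extensionality; intros [|n]; simpl.
           ++ reflexivity.
           ++ symmetry. apply subst_ll.
        -- apply functional_extensionality; intros a. rewrite map_map.
           rewrite <- (map_id (map (ren z') (r a))) at 1. apply map_ext.
           intros; symmetry; apply subst_ll.
  - cbn [sub appt fold_left].
    specialize (IHtyping1 (fun n => ren z' (s n)) (fun a => z' (z a))
       (fun a => map (ren z') (r a))).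
    specialize (IHtyping2 (fun n => ren z' (s n)) (fun a => z' (z a))
       (fun a => map (ren z') (r a))).
    assert (H1 : forall n B0, nth_error G n = Some B0 -> real x B0 (ren z' (s n))).
    { intros; apply real_ren; eauto. }
    assert (H2 : forall a B0, nth_error D a = Some B0 -> stk x B0 (map (ren z') (r a))).
    { intros; apply stk_ren; eauto. }
    specialize (IHtyping1 H1 H2 (fun a => a) (sub (fun n => ren z' (s n)) (fun a => z' (z a))
       (fun a => map (ren z') (r a)) v :: p)).
    rewrite ren_id in IHtyping1. apply IHtyping1. simpl.
    eexists _, _. split; [reflexivity|]. split; auto.
    intros z0 p0 Hq0. apply IHtyping2; auto.
  - cbn [sub].
    set (s' := fun n => ren z' (s n)). set (r' := fun a => map (ren z') (r a)).
    replace (upr r') with (R0 r' []).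
    2:{ apply functional_extensionality; intros [|b]; reflexivity. }
    eapply good_back. apply mu_red. simpl.
    destruct (IHtyping (fun n => lift_mu 0 (s' n)) (upz (fun a => z' (z a)))
      (R0 r' p)) with (z := fun a : nat => a) (p := @nil term) as [m [Hm Hred]].
    + intros n B0 HB. rewrite lm_ren. apply real_ren. apply real_ren. eauto.
    + intros [|b] B0 HB; simpl in HB.
      * injection HB as <-. apply stk_lift. auto.
      * apply stk_lift. apply stk_ren. eauto.
    + reflexivity.
    + rewrite ren_id in Hred. simpl in Hred. exists (Mu m). split.
      * constructor; auto.
      * apply red_ctx with (f := Mu); auto. intros. constructor; auto.
  - simpl in Hp. subst p. cbn [sub appt fold_left].
    destruct (IHtyping (fun n => ren z' (s n)) (fun a => z' (z a))
       (fun a => map (ren z') (r a))) with (z := fun a : nat => a)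
       (p := map (ren z') (r a)) as [m [Hm Hred]].
    + intros; apply real_ren; eauto.
    + intros; apply stk_ren; eauto.
    + apply stk_ren; eauto.
    + rewrite ren_id in Hred. exists (MApp (z' (z a)) m). split.
      * constructor; auto.
      * apply red_ctx with (f := MApp (z' (z a))); auto. intros. constructor; auto.
Qed.

Lemma sub_id : forall t, sub Var (fun a => a) (fun _ => []) t = t.
Proof. induction t; simpl; try (f_equal; auto; fail).
  - f_equal. rewrite <- IHt at 2. f_equal.
    apply functional_extensionality; intros [|n]; reflexivity.
  - f_equal. rewrite <- IHt at 2. f_equal.
    + apply functional_extensionality; intros [|n]; reflexivity.
    + apply functional_extensionality; intros [|n]; reflexivity.
  Qed.

Lemma apps_appt : forall ys t, apps t ys = appt t (map Var ys).
Proof. induction ys; intros; simpl; auto. Qed.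

Theorem mainTheorem7 (e : term) (X : nat) :
  typing nil nil e (TArr TBot (TVar X)) ->
  forall (x : nat) (ys : list nat),
    exists t, M (Var x) t /\ red (apps (App e (Var x)) ys) t.
Proof.
  intros H x ys.
  pose proof (adequacy x _ _ _ _ H Var (fun a => a) (fun _ => [])) as Ha.
  rewrite sub_id in Ha.
  destruct (Ha ltac:(intros [|n] B HB; discriminate) ltac:(intros [|n] B HB; discriminate)
     (fun a => a) (Var x :: map Var ys)) as [m [Hm Hr]].
  - simpl. eexists _, _. split; [reflexivity|]. split.
    + intros z0 p0 H0. simpl in H0. subst. exists (Var x). split; [constructor | apply rt_refl].
    + clear. induction ys; simpl; constructor; eauto.
  - exists m. split; auto. rewrite ren_id in Hr. rewrite apps_appt. exact Hr.
Qed.
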